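(* Let $x\in\mathcal D$ be such that $s_n(t)=\sum_{i}|x(t^n_{i+1}\wedge t)-x(t^n_i\wedge t)|^2$ converges pointwise on $[0,\infty)$ to a function $s$ satisfying $s(t)=s^c(t)+\sum_{u\le t}(\Delta x(u))^2$ with $s^c$ continuous and nondecreasing. Then $q_n(t)=\sum_{i:\,t^n_i\le t}(x(t^n_{i+1})-x(t^n_i))^2$ converges pointwise on $[0,\infty)$ to a limit $q$, $q=s$, and $q(t)=q^c(t)+\sum_{u\le t}(\Delta x(u))^2$ with $q^c$ continuous and nondecreasing.
   Context: Let $\pi=(\pi_n)_{n\ge1}$ be a sequence of partitions $\pi_n=(t^n_0,\dots,t^n_{k_n})$ with $0=t^n_0<\dots<t^n_{k_n}<\infty$, $t^n_{k_n}\uparrow\infty$, and mesh tending to $0$ on compacts; sums over $i$ run over $0\le i<k_n$. $\mathcal D$ is the space of càdlàg functions $[0,\infty)\to\mathbb R$; $\Delta x(u)=x(u)-x(u-)$. *)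

(* Defs.v *)
From HB Require Import structures.
From mathcomp Require Import all_boot all_order all_algebra.
From mathcomp Require Import all_classical all_reals all_analysis.
Set Implicit Arguments. Unset Strict Implicit. Unset Printing Implicit Defensive.
Import Order.TTheory GRing.Theory Num.Theory.
Import numFieldNormedType.Exports.
Local Open Scope classical_set_scope.
Local Open Scope ring_scope.

Definition partition_seq (R : realType) (k : nat -> nat) (tp : nat -> nat -> R) : Prop :=
  [/\ (forall n, tp n 0%N = 0),
      (forall n i, (i < k n)%N -> tp n i < tp n i.+1),
      (forall n, tp n (k n) <= tp n.+1 (k n.+1)),
      (fun n => tp n (k n)) @ \oo --> +oo &
      (forall T : R, 0 <= T -> forall e : R, 0 < e ->
         \forall n \near \oo, forall i, (i < k n)%N -> tp n i <= T ->
            tp n i.+1 - tp n i < e)].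

Definition cadlag (R : realType) (x : R -> R) : Prop :=
  (forall t : R, 0 <= t -> x @ t^'+ --> x t) /\
  (forall t : R, 0 < t -> cvg (x @ t^'-)).

(* Jump Delta x(u) = x(u) - x(u-), with the convention x(0-) = x(0). *)
Definition jump (R : realType) (x : R -> R) (u : R) : R :=
  if u <= 0 then 0 else x u - lim (x @ u^'-).

Definition sum_sq_jumps (R : realType) (x : R -> R) (t : R) : \bar R :=
  \esum_(u in [set u : R | 0 <= u <= t]) ((jump x u) ^+ 2)%:E.

Definition s_n (R : realType) (k : nat -> nat) (tp : nat -> nat -> R) (x : R -> R)
  (n : nat) (t : R) : R :=
  \sum_(0 <= i < k n) (x (Order.min (tp n i.+1) t) - x (Order.min (tp n i) t)) ^+ 2.

Definition q_n (R : realType) (k : nat -> nat) (tp : nat -> nat -> R) (x : R -> R)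
  (n : nat) (t : R) : R :=
  \sum_(0 <= i < k n | tp n i <= t) (x (tp n i.+1) - x (tp n i)) ^+ 2.

Definition qv_decomp (R : realType) (x : R -> R) (f : R -> R) : Prop :=
  exists fc : R -> R,
    {within `[0, +oo[, continuous fc} /\
    (forall u v : R, 0 <= u -> u <= v -> fc u <= fc v) /\
    (forall t : R, 0 <= t -> (f t)%:E = ((fc t)%:E + sum_sq_jumps x t)%E).

(* Main.v *)
Require Import Defs.
From HB Require Import structures.
From mathcomp Require Import all_boot all_order all_algebra.
From mathcomp Require Import all_classical all_reals all_analysis.
From mathcomp Require Import ring lra.
Import Order.TTheory GRing.Theory Num.Theory.
Import numFieldNormedType.Exports.
Local Open Scope classical_set_scope.
Local Open Scope ring_scope.
Lemma right_delta (R : realType) (P : R -> Prop) t : (\forall u \near t^'+, P u) ->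
  exists2 d : R, 0 < d & forall u, t < u -> u < t + d -> P u.
Proof.
rewrite near_withinE => /nbhs_ballP [d d0 H]; exists d => // u tu ud.
apply: H => //. rewrite /ball /= ltr_distlC. apply/andP; split; last by [].
by rewrite (lt_le_trans _ (ltW tu)) // ltrBlDr ltrDl.
Qed.
Lemma left_delta (R : realType) (P : R -> Prop) t : (\forall u \near t^'-, P u) ->
  exists2 d : R, 0 < d & forall u, t - d < u -> u < t -> P u.
Proof.
rewrite near_withinE => /nbhs_ballP [d d0 H]; exists d => // u tu ud.
apply: H => //. rewrite /ball /= ltr_distlC. apply/andP; split; first by [].
by rewrite (le_lt_trans (ltW ud)) // ltrDl.
Qed.
Lemma bracket (R : realType) (f : nat -> R) t m : f 0%N <= t -> t < f m ->
  exists i, [/\ (i < m)%N, f i <= t & t < f i.+1].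
Proof.
move=> h0; elim: m => [|m IH] hm; first by move: (le_lt_trans h0 hm); rewrite ltxx.
case: (ltP t (f m)) => h.
  by case: (IH h) => i [im h1 h2]; exists i; split => //; rewrite ltnS ltnW.
by exists m.
Qed.

Lemma mono_le (R : realType) (f : nat -> R) K : (forall i, (i < K)%N -> f i < f i.+1) ->
  forall j l, (j <= l <= K)%N -> f j <= f l.
Proof.
move=> h j l /andP[jl lK]; elim: l jl lK => [|l IH] jl lK.
  by move: jl; rewrite leqn0 => /eqP->.
move: jl; rewrite leq_eqVlt => /orP[/eqP->//|]; rewrite ltnS => jl.
apply: le_trans (IH jl (ltnW lK)) _; exact/ltW/h.
Qed.

Lemma diff_formula (R : realType) (k : nat -> nat) (tp : nat -> nat -> R) x n t i :
  (forall i, (i < k n)%N -> tp n i < tp n i.+1) ->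
  (i < k n)%N -> tp n i <= t -> t < tp n i.+1 ->
  q_n k tp x n t - s_n k tp x n t =
  (x (tp n i.+1) - x (tp n i)) ^+ 2 - (x t - x (tp n i)) ^+ 2.
Proof.
move=> hinc ik hl hr.
have mono := @mono_le _ _ _ hinc.
rewrite /q_n /s_n big_mkcond /= -sumrB big_mkord (bigD1 (Ordinal ik)) //=.
rewrite hl (@min_r _ _ (tp n i.+1) t) ?(ltW hr) // (@min_l _ _ (tp n i) t) //.
rewrite big1 ?addr0 // => j /eqP jne.
have jk := ltn_ord j.
case: (ltngtP j i) => ji.
- have h1 : tp n j.+1 <= t by apply: le_trans hl; apply: mono; rewrite ji /=; exact: ltnW.
  have h2 : tp n j <= t by apply: le_trans h1; exact/ltW/hinc.
  by rewrite h2 (@min_l _ _ (tp n j.+1) t) // (@min_l _ _ (tp n j) t) // subrr.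
- have h1 : t < tp n j by apply: lt_le_trans hr _; apply: mono; rewrite ji /=; exact: ltnW.
  have h2 : t < tp n j.+1 by apply: lt_trans h1 _; exact/hinc.
  rewrite leNgt h1 /= (@min_r _ _ (tp n j.+1) t) ?(ltW h2) //.
  by rewrite (@min_r _ _ (tp n j) t) ?(ltW h1) // subrr expr0n /= subrr.
- by exfalso; apply: jne; apply: val_inj; rewrite /= ji.
Qed.
Lemma arith (R : realType) (a b c K e : R) : 0 <= K -> 0 < e ->
  `|b - a| < Num.min 1 (e / (1 + 2 * K)) -> `|b - c| <= K ->
  `|0 - ((a - c) ^+ 2 - (b - c) ^+ 2)| < e.
Proof.
move=> K0 e0; rewrite lt_min => /andP[h1 h2] h3.
have hK : 0 < 1 + 2 * K by rewrite ltr_pwDl // mulr_ge0.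
have -> : 0 - ((a - c) ^+ 2 - (b - c) ^+ 2) = - ((b - a) * ((b - a) - 2 * (b - c))) by ring.
rewrite normrN normrM.
have h4 : `|(b - a) - 2 * (b - c)| <= 1 + 2 * K.
  apply: le_trans (ler_normB _ _) _; rewrite lerD ?(ltW h1) // normrM.
  by rewrite ger0_norm // ler_wpM2l.
apply: le_lt_trans (ler_wpM2l (normr_ge0 _) h4) _.
by rewrite -ltr_pdivlMr.
Qed.

Arguments left_delta {R P t}.
Arguments right_delta {R P t}.
Arguments bracket {R f t m}.
Arguments diff_formula {R k tp} x {n t i}.

Theorem proposition2p4 (R : realType) (k : nat -> nat) (tp : nat -> nat -> R)
  (x : R -> R) (s : R -> R) :
  partition_seq k tp ->
  cadlag x ->
  (forall t : R, 0 <= t -> (fun n => s_n k tp x n t) @ \oo --> s t) ->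
  qv_decomp x s ->
  exists q : R -> R,
    (forall t : R, 0 <= t -> (fun n => q_n k tp x n t) @ \oo --> q t) /\
    (forall t : R, 0 <= t -> q t = s t) /\
    qv_decomp x q.
Proof.
move=> [h0 hinc _ hinf hmesh] [xr xl] hs hdec.
exists s; split; last by split.
move=> t t0.
have [K [d0 [K0 d00 hK]]] : exists K d0 : R, [/\ 0 <= K, 0 < d0 &
    forall u, t - d0 < u -> u <= t -> 0 <= u -> `|x t - x u| <= K].
  case: (ltP 0 t) => tpos.
    have [L hL] := (cvg_ex _).1 (xl t tpos).
    move/cvgr_dist_lt: hL => /(_ _ ltr01) hL.
    have [d d0 hd] := left_delta hL.
    exists (`|x t - L| + 1), d; split => //.
    move=> u h1; rewrite le_eqVlt => /orP[/eqP->|h2] _.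
      by rewrite subrr normr0.
    have -> : x t - x u = (x t - L) + (L - x u) by rewrite addrA subrK.
    by apply: le_trans (ler_normD _ _) _; rewrite lerD //; apply/ltW/hd.
  exists 0, 1; split => // u _ h1 h2.
  have -> : u = t by apply/eqP; rewrite eq_le h1 (le_trans tpos h2).
  by rewrite subrr normr0.
have hd : (fun n => q_n k tp x n t - s_n k tp x n t) @ \oo --> 0.
  apply/cvgrPdist_lt => e e0.
  have hK1 : 0 < 1 + 2 * K by rewrite ltr_pwDl // mulr_ge0.
  have eta0 : 0 < Num.min 1 (e / (1 + 2 * K)) by rewrite lt_min ltr01 divr_gt0.
  have := xr t t0; move/cvgr_dist_lt => /(_ _ eta0) hr0.
  have [d1 d10 hd1] := right_delta hr0.
  have dpos : 0 < Num.min d0 d1 by rewrite lt_min d00 d10.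
  have /cvgryPgt hk := hinf.
  have hm := hmesh t t0 _ dpos.
  near=> n.
  have Hk : t < tp n (k n) by near: n; exact: hk.
  have Hm : forall i, (i < k n)%N -> tp n i <= t -> tp n i.+1 - tp n i < Num.min d0 d1.
    by near: n; exact: hm.
  have h0n : tp n 0%N <= t by rewrite h0.
  have [i [ik hl hr]] := bracket h0n Hk.
  rewrite (diff_formula x (hinc n) ik hl hr).
  have := Hm i ik hl; rewrite lt_min => /andP[m0 m1].
  apply: (@arith _ _ _ _ K e K0 e0).
    apply: hd1 => //.
    by lra.
  apply: hK => //.
    by lra.
  have := @mono_le _ (tp n) _ (hinc n) 0 i; rewrite h0; apply.
  by rewrite /= ltnW.
have -> : (fun n => q_n k tp x n t) =
    (fun n => s_n k tp x n t + (q_n k tp x n t - s_n k tp x n t)).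
  by apply: funext => n; rewrite addrC subrK.
rewrite -[s t]addr0; apply: cvgD => //; exact: hs.
Unshelve. all: end_near.
Qed.
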